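(* Let $(A,\dashv,\perp,\vdash,\varepsilon)$ be an associative color trialgebra. Then $A$ is a ternary Leibniz color algebra with respect to the bracket $$[x,y,z]:=x\dashv\big(y\perp z-\varepsilon(y,z)\,z\perp y\big)-\varepsilon(x,y+z)\big(y\perp z-\varepsilon(y,z)\,z\perp y\big)\vdash x$$ for all $x,y,z\in\mathcal{H}(A)$.
   Context: $G$ is an abelian group, $\mathbb{K}$ a field of characteristic $\neq 2$, $\mathcal{H}(V)$ the homogeneous elements of a $G$-graded space $V$; even maps preserve degree. A skew-symmetric bicharacter $\varepsilon:G\times G\to\mathbb{K}^*$ satisfies $\varepsilon(a,b)\varepsilon(b,a)=1$, $\varepsilon(a,b+c)=\varepsilon(a,b)\varepsilon(a,c)$, $\varepsilon(a+b,c)=\varepsilon(a,c)\varepsilon(b,c)$; $\varepsilon(x,y)$ means $\varepsilon$ of the degrees. An associative color trialgebra is a $G$-graded space $A$ with such $\varepsilon$ and three even bilinear associative operations $\dashv,\perp,\vdash$ satisfying, for all homogeneous $x,y,z$: $(x\dashv y)\dashv z=x\dashv(y\vdash z)=x\dashv(y\perp z)$; $(x\vdash y)\dashv z=x\vdash(y\dashv z)$; $(x\dashv y)\vdash z=x\vdash(y\vdash z)=(x\perp y)\vdash z$; $(x\perp y)\dashv z=x\perp(y\dashv z)$; $(x\dashv y)\perp z=x\perp(y\vdash z)$; $(x\vdash y)\perp z=x\vdash(y\perp z)$. A ternary Leibniz color algebra is a $G$-graded space with such $\varepsilon$ and an even trilinear $[-,-,-]$ satisfying $[[x,y,z],t,u]=[x,y,[z,t,u]]+\varepsilon(z,t+u)[x,[y,t,u],z]+\varepsilon(y+z,t+u)[[x,t,u],y,z]$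 for all homogeneous $x,y,z,t,u$. *)

(* Defs.v *)
From HB Require Import structures.
From mathcomp Require Import all_boot all_order all_algebra.
Set Implicit Arguments. Unset Strict Implicit. Unset Printing Implicit Defensive.
Import Order.TTheory GRing.Theory.
Local Open Scope ring_scope.

Section Defs.
Variables (G : zmodType) (K : fieldType) (A : lmodType K).

Definition is_grading (hom : G -> A -> Prop) : Prop :=
  [/\ (forall g, hom g 0),
      (forall g (k : K) (u v : A), hom g u -> hom g v -> hom g (k *: u + v)),
      (forall x : A, exists s : seq G, exists f : G -> A,
          [/\ uniq s, (forall g, hom g (f g)) & x = \sum_(g <- s) f g])
    & (forall (s : seq G) (f : G -> A), uniq s -> (forall g, hom g (f g)) ->
          \sum_(g <- s) f g = 0 -> forall g, g \in s -> f g = 0)].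

Definition skew_bicharacter (eps : G -> G -> K) : Prop :=
  [/\ (forall a b, eps a b != 0),
      (forall a b, eps a b * eps b a = 1),
      (forall a b c, eps a (b + c) = eps a b * eps a c)
    & (forall a b c, eps (a + b) c = eps a c * eps b c)].

Definition even_bilinear (hom : G -> A -> Prop) (op : A -> A -> A) : Prop :=
  [/\ (forall (k : K) x x' y, op (k *: x + x') y = k *: op x y + op x' y),
      (forall (k : K) x y y', op x (k *: y + y') = k *: op x y + op x y')
    & (forall a b x y, hom a x -> hom b y -> hom (a + b) (op x y))].

Definition even_trilinear (hom : G -> A -> Prop) (T : A -> A -> A -> A) : Prop :=
  [/\ (forall (k : K) x x' y z, T (k *: x + x') y z = k *: T x y z + T x' y z),
      (forall (k : K) x y y' z, T x (k *: y + y') z = k *: T x y z + T x y' z),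
      (forall (k : K) x y z z', T x y (k *: z + z') = k *: T x y z + T x y z')
    & (forall a b c x y z, hom a x -> hom b y -> hom c z ->
         hom (a + b + c) (T x y z))].

(* associative color trialgebra (dl = ⊣, pp = ⊥, dr = ⊢) *)
Definition color_trialgebra (hom : G -> A -> Prop) (eps : G -> G -> K)
    (dl pp dr : A -> A -> A) : Prop :=
  [/\ is_grading hom, skew_bicharacter eps,
      [/\ even_bilinear hom dl, even_bilinear hom pp & even_bilinear hom dr]
    & forall a b c x y z, hom a x -> hom b y -> hom c z ->
      dl (dl x y) z = dl x (dl y z) /\
      pp (pp x y) z = pp x (pp y z) /\
      dr (dr x y) z = dr x (dr y z) /\
      (dl (dl x y) z = dl x (dr y z) /\ dl x (dr y z) = dl x (pp y z)) /\
      dl (dr x y) z = dr x (dl y z) /\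
      (dr (dl x y) z = dr x (dr y z) /\ dr x (dr y z) = dr (pp x y) z) /\
      dl (pp x y) z = pp x (dl y z) /\
      pp (dl x y) z = pp x (dr y z) /\
      pp (dr x y) z = dr x (pp y z)].

Definition ternary_leibniz_color (hom : G -> A -> Prop) (eps : G -> G -> K)
    (T : A -> A -> A -> A) : Prop :=
  [/\ is_grading hom, skew_bicharacter eps, even_trilinear hom T
    & forall a b c d e x y z t u,
        hom a x -> hom b y -> hom c z -> hom d t -> hom e u ->
        T (T x y z) t u =
          T x y (T z t u) + eps c (d + e) *: T x (T y t u) z
          + eps (b + c) (d + e) *: T (T x t u) y z].

(* the bracket on homogeneous x, y, z of degrees a, b, c *)
Definition tri_bracket (eps : G -> G -> K) (dl pp dr : A -> A -> A)
    (a b c : G) (x y z : A) : A :=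
  let w := pp y z - eps b c *: pp z y in
  dl x w - eps a (b + c) *: dr w x.

End Defs.

(* Main.v *)
Require Import Defs.
From mathcomp Require Import all_boot all_order all_algebra.
From mathcomp Require Import ring.
From Stdlib Require Import IndefiniteDescription.
Import GRing.Theory.
Local Open Scope ring_scope.
Set Implicit Arguments. Unset Strict Implicit.

Section Bil.
Variables (K : fieldType) (A : lmodType K) (f : A -> A -> A).
Hypothesis fL : forall (k : K) x x' y, f (k *: x + x') y = k *: f x y + f x' y.
Hypothesis fR : forall (k : K) x y y', f x (k *: y + y') = k *: f x y + f x y'.
Lemma f0l y : f 0 y = 0.
Proof. have H := fL 1 0 0 y; rewrite !scale1r addr0 in H.
apply: (addrI (f 0 y)); by rewrite addr0 -H. Qed.
Lemma f0r y : f y 0 = 0.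
Proof. have H := fR 1 y 0 0; rewrite !scale1r addr0 in H.
apply: (addrI (f y 0)); by rewrite addr0 -H. Qed.
Lemma fZl k x y : f (k *: x) y = k *: f x y.
Proof. by have := fL k x 0 y; rewrite addr0 f0l addr0. Qed.
Lemma fZr k x y : f y (k *: x) = k *: f y x.
Proof. by have := fR k y x 0; rewrite addr0 f0r addr0. Qed.
Lemma fDl x x' y : f (x + x') y = f x y + f x' y.
Proof. by have := fL 1 x x' y; rewrite !scale1r. Qed.
Lemma fDr x x' y : f y (x + x') = f y x + f y x'.
Proof. by have := fR 1 y x x'; rewrite !scale1r. Qed.
Lemma fNl x y : f (- x) y = - f x y.
Proof. by rewrite -scaleN1r fZl scaleN1r. Qed.
Lemma fNr x y : f y (- x) = - f y x.
Proof. by rewrite -scaleN1r fZr scaleN1r. Qed.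
Lemma fBl x x' y : f (x - x') y = f x y - f x' y.
Proof. by rewrite fDl fNl. Qed.
Lemma fBr x x' y : f y (x - x') = f y x - f y x'.
Proof. by rewrite fDr fNr. Qed.
End Bil.


Section LC.
Variables (K : fieldType) (A : lmodType K).
Definition lc (ms : A * A * A * A * A * A) (c1 c2 c3 c4 c5 c6 : K) : A :=
  c1 *: ms.1.1.1.1.1 + (c2 *: ms.1.1.1.1.2 + (c3 *: ms.1.1.1.2 + (c4 *: ms.1.1.2
   + (c5 *: ms.1.2 + c6 *: ms.2)))).
Lemma lcD ms c1 c2 c3 c4 c5 c6 d1 d2 d3 d4 d5 d6 :
  lc ms c1 c2 c3 c4 c5 c6 + lc ms d1 d2 d3 d4 d5 d6
  = lc ms (c1 + d1) (c2 + d2) (c3 + d3) (c4 + d4) (c5 + d5) (c6 + d6).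
Proof. rewrite /lc !scalerDl.
rewrite addrACA; congr (_ + _); rewrite addrACA; congr (_ + _);
rewrite addrACA; congr (_ + _); rewrite addrACA; congr (_ + _);
by rewrite addrACA. Qed.
Lemma lcZ ms k c1 c2 c3 c4 c5 c6 :
  k *: lc ms c1 c2 c3 c4 c5 c6 = lc ms (k * c1) (k * c2) (k * c3) (k * c4) (k * c5) (k * c6).
Proof. by rewrite /lc !scalerDr !scalerA. Qed.
Lemma lcN ms c1 c2 c3 c4 c5 c6 :
  - lc ms c1 c2 c3 c4 c5 c6 = lc ms (- c1) (- c2) (- c3) (- c4) (- c5) (- c6).
Proof. by rewrite -scaleN1r lcZ !mulN1r. Qed.
Lemma lcB ms c1 c2 c3 c4 c5 c6 d1 d2 d3 d4 d5 d6 :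
  lc ms c1 c2 c3 c4 c5 c6 - lc ms d1 d2 d3 d4 d5 d6
  = lc ms (c1 - d1) (c2 - d2) (c3 - d3) (c4 - d4) (c5 - d5) (c6 - d6).
Proof. by rewrite lcN lcD. Qed.
Lemma lc1 ms : ms.1.1.1.1.1 = lc ms 1 0 0 0 0 0.
Proof. by rewrite /lc !scale0r !addr0 scale1r. Qed.
Lemma lc2 ms : ms.1.1.1.1.2 = lc ms 0 1 0 0 0 0.
Proof. by rewrite /lc !scale0r !addr0 add0r scale1r. Qed.
Lemma lc3 ms : ms.1.1.1.2 = lc ms 0 0 1 0 0 0.
Proof. by rewrite /lc !scale0r !addr0 !add0r scale1r. Qed.
Lemma lc4 ms : ms.1.1.2 = lc ms 0 0 0 1 0 0.
Proof. by rewrite /lc !scale0r !addr0 !add0r scale1r. Qed.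
Lemma lc5 ms : ms.1.2 = lc ms 0 0 0 0 1 0.
Proof. by rewrite /lc !scale0r !addr0 !add0r scale1r. Qed.
Lemma lc6 ms : ms.2 = lc ms 0 0 0 0 0 1.
Proof. by rewrite /lc !scale0r !add0r scale1r. Qed.
End LC.
Lemma sum_sub (G : eqType) (V : zmodType) (S s : seq G) (F : G -> V) :
  uniq S -> uniq s -> {subset s <= S} ->
  \sum_(g <- S) (if g \in s then F g else 0) = \sum_(g <- s) F g.
Proof.
move=> uS us sS; rewrite -big_mkcond -big_filter; apply: perm_big.
apply: uniq_perm => //; first exact: filter_uniq.
by move=> g; rewrite mem_filter andb_idr // => /sS.
Qed.

Section Grading.
Variables (G : zmodType) (K : fieldType) (A : lmodType K) (hom : G -> A -> Prop).
Hypothesis gr : is_grading hom.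

Lemma hom0 g : hom g 0. Proof. by case: gr. Qed.
Lemma homL g k u v : hom g u -> hom g v -> hom g (k *: u + v).
Proof. by case: gr => _ H _ _; apply: H. Qed.
Lemma homZ g k u : hom g u -> hom g (k *: u).
Proof. by move=> h; have := homL k h (hom0 g); rewrite addr0. Qed.
Lemma homD g u v : hom g u -> hom g v -> hom g (u + v).
Proof. by move=> h1 h2; have := homL 1 h1 h2; rewrite scale1r. Qed.
Lemma homB g u v : hom g u -> hom g v -> hom g (u - v).
Proof. by move=> h1 h2; apply: homD => //; rewrite -scaleN1r; apply: homZ. Qed.

Lemma decomp_ex x : {sf : seq G * (G -> A) |
  [/\ uniq sf.1, (forall g, hom g (sf.2 g)) & x = \sum_(g <- sf.1) sf.2 g]}.
Proof.
apply: constructive_indefinite_description.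
case: gr => _ _ H _; have [s [f [? ? ?]]] := H x; by exists (s, f).
Qed.

Definition supp x := (sval (decomp_ex x)).1.
Definition comp x := (sval (decomp_ex x)).2.
Definition proj g x := if g \in supp x then comp x g else 0.

Lemma comp_spec x :
  [/\ uniq (supp x), forall g, hom g (comp x g) & x = \sum_(g <- supp x) comp x g].
Proof. by rewrite /supp /comp; case: (decomp_ex x) => [[s f] H]. Qed.

Lemma projU (s : seq G) (f : G -> A) x : uniq s -> (forall g, hom g (f g)) ->
  x = \sum_(g <- s) f g -> forall g, proj g x = if g \in s then f g else 0.
Proof.
move=> us hf ex g; have [u1 h1 e1] := comp_spec x.
pose S := undup (supp x ++ s).
have uS : uniq S := undup_uniq _.
have s1S : {subset supp x <= S} by move=> i Hi; rewrite mem_undup mem_cat Hi.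
have s2S : {subset s <= S} by move=> i Hi; rewrite mem_undup mem_cat Hi orbT.
pose h i := (if i \in supp x then comp x i else 0) - (if i \in s then f i else 0).
have hh : forall i, hom i (h i).
  by move=> i; apply: homB; case: ifP => _ //; apply: hom0.
have sh : \sum_(i <- S) h i = 0.
  by rewrite sumrB !sum_sub // -e1 -ex subrr.
case: gr => _ _ _ Hdir; have H := Hdir S h uS hh sh.
rewrite /proj; case: (boolP (g \in S)) => gS.
  by move: (H g gS) => /eqP; rewrite /h subr_eq0 => /eqP.
have g1 : g \notin supp x by apply: contra gS; apply: s1S.
have g2 : g \notin s by apply: contra gS; apply: s2S.
by rewrite (negbTE g1) (negbTE g2).
Qed.

Lemma proj_hom g x : hom g (proj g x).
Proof. rewrite /proj; case: ifP => _; [by case: (comp_spec x)| exact: hom0]. Qed.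

Lemma proj_out g x : g \notin supp x -> proj g x = 0.
Proof. by rewrite /proj => /negbTE ->. Qed.

Lemma supp_uniq x : uniq (supp x). Proof. by case: (comp_spec x). Qed.

Lemma sum_proj (S : seq G) x : uniq S -> {subset supp x <= S} ->
  \sum_(g <- S) proj g x = x.
Proof.
move=> uS sS; have [u1 _ e1] := comp_spec x.
by rewrite [RHS]e1 -(sum_sub _ uS u1 sS).
Qed.

Lemma proj_lin g k x y : proj g (k *: x + y) = k *: proj g x + proj g y.
Proof.
pose S := undup (supp x ++ supp y).
have uS : uniq S := undup_uniq _.
have s1S : {subset supp x <= S} by move=> i Hi; rewrite mem_undup mem_cat Hi.
have s2S : {subset supp y <= S} by move=> i Hi; rewrite mem_undup mem_cat Hi orbT.
rewrite (@projU S (fun g => k *: proj g x + proj g y)) //.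
- case: ifP => // /negbT gS.
  rewrite !proj_out ?scaler0 ?addr0 //; apply: contra gS; [exact: s2S|exact: s1S].
- by move=> i; apply: homL; apply: proj_hom.
- by rewrite big_split /= -scaler_sumr !sum_proj.
Qed.

Lemma proj_homog a x g : hom a x -> proj g x = if g == a then x else 0.
Proof.
move=> hx.
have h1 : forall i, hom i (if i == a then x else 0).
  by move=> i; case: eqP => [->|_] //; apply: hom0.
have h2 : x = \sum_(i <- [:: a]) (if i == a then x else 0) by rewrite big_seq1 eqxx.
rewrite (@projU [:: a] _ x _ h1 h2) //.
by rewrite inE; case: (g == a).
Qed.

Definition Sg (F : G -> A -> A) x := \sum_(g <- supp x) F g (proj g x).

Lemma Sg_range F x S : (forall g, F g 0 = 0) -> uniq S -> {subset supp x <= S} ->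
  Sg F x = \sum_(g <- S) F g (proj g x).
Proof.
move=> F0 uS sS; rewrite /Sg -(sum_sub _ uS (supp_uniq x) sS).
by apply: eq_bigr => g _; case: ifP => // /negbT /proj_out ->.
Qed.

Lemma Sg_ext F F' x : (forall g u, F g u = F' g u) -> Sg F x = Sg F' x.
Proof. by move=> H; apply: eq_bigr. Qed.

Lemma Sg_linF k F1 F2 x :
  Sg (fun g u => k *: F1 g u + F2 g u) x = k *: Sg F1 x + Sg F2 x.
Proof. by rewrite /Sg big_split /= scaler_sumr. Qed.

Lemma Sg_zero x : Sg (fun _ _ => 0) x = 0.
Proof. by rewrite /Sg big1. Qed.

Lemma Sg_lin F k x x' : (forall g k u u', F g (k *: u + u') = k *: F g u + F g u') ->
  Sg F (k *: x + x') = k *: Sg F x + Sg F x'.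
Proof.
move=> FL.
have F0 : forall g, F g 0 = 0.
  move=> g; have := FL g 1 0 0; rewrite !scale1r addr0 => H.
  by apply: (addrI (F g 0)); rewrite addr0 -H.
pose S := undup (supp x ++ supp x' ++ supp (k *: x + x')).
have uS : uniq S := undup_uniq _.
rewrite !(@Sg_range F _ S) //;
  try by move=> i Hi; rewrite mem_undup !mem_cat Hi ?orbT.
rewrite scaler_sumr -big_split /=; apply: eq_bigr => g _.
by rewrite proj_lin FL.
Qed.

Lemma Sg_homog F a x : (forall g, F g 0 = 0) -> hom a x -> Sg F x = F a x.
Proof.
move=> F0 hx.
pose S := undup (supp x ++ [:: a]).
have uS : uniq S := undup_uniq _.
rewrite (@Sg_range F x S) //; last by move=> i Hi; rewrite mem_undup mem_cat Hi.
rewrite -[RHS](big_seq1 +%R a (fun g => F g x)).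
rewrite -(@sum_sub G A S [:: a] (fun g => F g x) uS) //; last by move=> i; rewrite inE => /eqP ->; rewrite mem_undup mem_cat inE eqxx orbT.
apply: eq_bigr => g _; rewrite (proj_homog g hx) inE; case: ifP => //.
Qed.
End Grading.

Section Alg.
Variables (G : zmodType) (K : fieldType) (A : lmodType K) (hom : G -> A -> Prop)
  (eps : G -> G -> K) (dl pp dr : A -> A -> A).
Hypothesis trial : color_trialgebra hom eps dl pp dr.

Lemma gr : is_grading hom. Proof. by case: trial. Qed.
Lemma bich : skew_bicharacter eps. Proof. by case: trial. Qed.
Lemma epsnz a b : eps a b != 0. Proof. by case: bich. Qed.
Lemma epsI a b : eps a b * eps b a = 1. Proof. by case: bich. Qed.
Lemma epsR a b c : eps a (b + c) = eps a b * eps a c. Proof. by case: bich. Qed.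
Lemma epsL a b c : eps (a + b) c = eps a c * eps b c. Proof. by case: bich. Qed.
Lemma epsV a b : eps b a = (eps a b)^-1.
Proof. by apply: (mulfI (epsnz a b)); rewrite epsI mulfV // epsnz. Qed.

Lemma bils : [/\ even_bilinear hom dl, even_bilinear hom pp & even_bilinear hom dr].
Proof. by case: trial. Qed.
Lemma dlL k x x' y : dl (k *: x + x') y = k *: dl x y + dl x' y.
Proof. by case: bils => [[]]. Qed.
Lemma dlR k x y y' : dl x (k *: y + y') = k *: dl x y + dl x y'.
Proof. by case: bils => [[]]. Qed.
Lemma ppL k x x' y : pp (k *: x + x') y = k *: pp x y + pp x' y.
Proof. by case: bils => _ [] . Qed.
Lemma ppR k x y y' : pp x (k *: y + y') = k *: pp x y + pp x y'.
Proof. by case: bils => _ []. Qed.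
Lemma drL k x x' y : dr (k *: x + x') y = k *: dr x y + dr x' y.
Proof. by case: bils => _ _ []. Qed.
Lemma drR k x y y' : dr x (k *: y + y') = k *: dr x y + dr x y'.
Proof. by case: bils => _ _ []. Qed.
Lemma dl_hom a b x y : hom a x -> hom b y -> hom (a + b) (dl x y).
Proof. by case: bils => [[_ _ H] _ _]; apply: H. Qed.
Lemma pp_hom a b x y : hom a x -> hom b y -> hom (a + b) (pp x y).
Proof. by case: bils => [_ [_ _ H] _]; apply: H. Qed.
Lemma dr_hom a b x y : hom a x -> hom b y -> hom (a + b) (dr x y).
Proof. by case: bils => [_ _ [_ _ H]]; apply: H. Qed.

Ltac bil L R := by apply: L; (exact: dlL || exact: dlR || exact: ppL || exact: ppR || exact: drL || exact: drR).

Lemma dlBl x x' y : dl (x - x') y = dl x y - dl x' y. Proof. bil fBl dlL. Qed.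
Lemma dlBr x x' y : dl y (x - x') = dl y x - dl y x'. Proof. bil fBr dlR. Qed.
Lemma dlZl k x y : dl (k *: x) y = k *: dl x y. Proof. bil fZl dlL. Qed.
Lemma dlZr k x y : dl y (k *: x) = k *: dl y x. Proof. bil fZr dlR. Qed.
Lemma dlDl x x' y : dl (x + x') y = dl x y + dl x' y. Proof. bil fDl dlL. Qed.
Lemma dlDr x x' y : dl y (x + x') = dl y x + dl y x'. Proof. bil fDr dlR. Qed.
Lemma ppBl x x' y : pp (x - x') y = pp x y - pp x' y. Proof. bil fBl dlL. Qed.
Lemma ppBr x x' y : pp y (x - x') = pp y x - pp y x'. Proof. bil fBr dlR. Qed.
Lemma ppZl k x y : pp (k *: x) y = k *: pp x y. Proof. bil fZl dlL. Qed.
Lemma ppZr k x y : pp y (k *: x) = k *: pp y x. Proof. bil fZr dlR. Qed.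
Lemma ppDl x x' y : pp (x + x') y = pp x y + pp x' y. Proof. bil fDl dlL. Qed.
Lemma ppDr x x' y : pp y (x + x') = pp y x + pp y x'. Proof. bil fDr dlR. Qed.
Lemma drBl x x' y : dr (x - x') y = dr x y - dr x' y. Proof. bil fBl dlL. Qed.
Lemma drBr x x' y : dr y (x - x') = dr y x - dr y x'. Proof. bil fBr dlR. Qed.
Lemma drZl k x y : dr (k *: x) y = k *: dr x y. Proof. bil fZl dlL. Qed.
Lemma drZr k x y : dr y (k *: x) = k *: dr y x. Proof. bil fZr dlR. Qed.
Lemma drDl x x' y : dr (x + x') y = dr x y + dr x' y. Proof. bil fDl dlL. Qed.
Lemma drDr x x' y : dr y (x + x') = dr y x + dr y x'. Proof. bil fDr dlR. Qed.

Section Ax.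
Variables (a b c : G) (x y z : A).
Hypotheses (hx : hom a x) (hy : hom b y) (hz : hom c z).
Let AX := match trial with And4 _ _ _ H => H a b c x y z hx hy hz end.
Lemma ax1 : dl (dl x y) z = dl x (dl y z). Proof. by case: AX. Qed.
Lemma ax3 : dr (dr x y) z = dr x (dr y z). Proof. by case: AX => _ [_ []]. Qed.
Lemma ax4a : dl (dl x y) z = dl x (dr y z). Proof. by case: AX => _ [_ [_ [[]]]]. Qed.
Lemma ax5 : dl (dr x y) z = dr x (dl y z). Proof. by case: AX => _ [_ [_ [_ []]]]. Qed.
Lemma ax6a : dr (dl x y) z = dr x (dr y z). Proof. by case: AX => _ [_ [_ [_ [_ [[]]]]]]. Qed.
Lemma ax7 : dl (pp x y) z = pp x (dl y z). Proof. by case: AX => _ [_ [_ [_ [_ [_ []]]]]]. Qed.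
Lemma ax8 : pp (dl x y) z = pp x (dr y z). Proof. by case: AX => _ [_ [_ [_ [_ [_ [_ []]]]]]]. Qed.
Lemma ax9 : pp (dr x y) z = dr x (pp y z). Proof. by case: AX => _ [_ [_ [_ [_ [_ [_ [_ ]]]]]]]. Qed.
End Ax.


Definition D a g x w := dl x w - eps a g *: dr w x.
Definition W b c y z := pp y z - eps b c *: pp z y.

Lemma leib a g h x w v : hom a x -> hom g w -> hom h v ->
  D (a + g) h (D a g x w) v
  = D a (g + h) x (D g h w v) + eps g h *: D (a + h) g (D a h x v) w.
Proof.
move=> hx hw hv; rewrite /D.
rewrite !(dlBl, dlZl, drBr, drZr, dlBr, dlZr, drBl, drZl).
rewrite (ax1 hx hw hv) (ax5 hw hx hv) -(ax4a hx hv hw) (ax6a hw hv hx) (ax3 hv hw hx).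
rewrite (ax5 hv hx hw).
set N1 := dl x (dl w v); set N2 := dr w (dl x v); set N3 := dr v (dl x w);
set N4 := dr v (dr w x); set N5 := dl (dl x v) w; set N6 := dr w (dr v x).
pose ms := (N1, N2, N3, N4, N5, N6).
have e1 : N1 = lc ms 1 0 0 0 0 0 := lc1 ms.
have e2 : N2 = lc ms 0 1 0 0 0 0 := lc2 ms.
have e3 : N3 = lc ms 0 0 1 0 0 0 := lc3 ms.
have e4 : N4 = lc ms 0 0 0 1 0 0 := lc4 ms.
have e5 : N5 = lc ms 0 0 0 0 1 0 := lc5 ms.
have e6 : N6 = lc ms 0 0 0 0 0 1 := lc6 ms.
rewrite e1 e2 e3 e4 e5 e6 !(lcZ, lcN, lcB, lcD).
congr lc; rewrite ?epsR ?epsL ?(epsV g h); field; rewrite ?epsnz //.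
Qed.

Ltac lcs6 m1 m2 m3 m4 m5 m6 :=
  let N1 := fresh "N" in let N2 := fresh "N" in let N3 := fresh "N" in
  let N4 := fresh "N" in let N5 := fresh "N" in let N6 := fresh "N" in
  set N1 := m1; set N2 := m2; set N3 := m3; set N4 := m4; set N5 := m5; set N6 := m6;
  let ms := fresh "ms" in pose ms := (N1, N2, N3, N4, N5, N6);
  rewrite [N1](lc1 ms) [N2](lc2 ms) [N3](lc3 ms) [N4](lc4 ms) [N5](lc5 ms) [N6](lc6 ms)
    !(lcZ, lcN, lcB, lcD); congr lc.
Ltac lcs4 m1 m2 m3 m4 :=
  let N1 := fresh "N" in let N2 := fresh "N" in let N3 := fresh "N" in
  let N4 := fresh "N" in
  set N1 := m1; set N2 := m2; set N3 := m3; set N4 := m4;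
  let ms := fresh "ms" in pose ms := (N1, N2, N3, N4, 0 : A, 0 : A);
  rewrite [N1](lc1 ms) [N2](lc2 ms) [N3](lc3 ms) [N4](lc4 ms)
    !(lcZ, lcN, lcB, lcD); congr lc.
Ltac lcs3 m1 m2 m3 :=
  let N1 := fresh "N" in let N2 := fresh "N" in let N3 := fresh "N" in
  set N1 := m1; set N2 := m2; set N3 := m3;
  let ms := fresh "ms" in pose ms := (N1, N2, N3, 0 : A, 0 : A, 0 : A);
  rewrite [N1](lc1 ms) [N2](lc2 ms) [N3](lc3 ms)
    !(lcZ, lcN, lcB, lcD); congr lc.

Lemma DL a g k x x' w : D a g (k *: x + x') w = k *: D a g x w + D a g x' w.
Proof.
rewrite /D dlL drR.
lcs4 (dl x w) (dl x' w) (dr w x) (dr w x'); by rewrite ?mulr0 ?mulr1; ring.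
Qed.
Lemma DR a g k x w w' : D a g x (k *: w + w') = k *: D a g x w + D a g x w'.
Proof.
rewrite /D dlR drL.
lcs4 (dl x w) (dl x w') (dr w x) (dr w' x); by rewrite ?mulr0 ?mulr1; ring.
Qed.
Lemma WL b c k y y' z : W b c (k *: y + y') z = k *: W b c y z + W b c y' z.
Proof.
rewrite /W ppL ppR.
lcs4 (pp y z) (pp y' z) (pp z y) (pp z y'); by rewrite ?mulr0 ?mulr1; ring.
Qed.
Lemma WR b c k y z z' : W b c y (k *: z + z') = k *: W b c y z + W b c y z'.
Proof.
rewrite /W ppL ppR.
lcs4 (pp y z) (pp y z') (pp z y) (pp z' y); by rewrite ?mulr0 ?mulr1; ring.
Qed.

Lemma perp_der bc b c h y z v : bc = b + c -> hom b y -> hom c z -> hom h v ->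
  D bc h (pp y z) v = pp y (D c h z v) + eps c h *: pp (D b h y v) z.
Proof.
move=> -> hy hz hv; rewrite /D !(ppBl, ppZl, ppBr, ppZr).
rewrite (ax7 hy hz hv) -(ax9 hv hy hz) (ax8 hy hv hz).
lcs3 (pp y (dl z v)) (pp (dr v y) z) (pp y (dr v z));
  rewrite ?epsR ?epsL; field; rewrite ?epsnz //.
Qed.

Lemma W_der b c h y z v : hom b y -> hom c z -> hom h v ->
  D (b + c) h (W b c y z) v
  = W b (c + h) y (D c h z v) + eps c h *: W (b + h) c (D b h y v) z.
Proof.
move=> hy hz hv.
have DB : forall a g x x' w, D a g (x - x') w = D a g x w - D a g x' w.
  by move=> *; apply: fBl => *; apply: DL.
have DZ : forall a g k x w, D a g (k *: x) w = k *: D a g x w.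
  by move=> *; apply: fZl => *; apply: DL.
rewrite /W DB DZ (perp_der (erefl _) hy hz hv) (@perp_der _ c b h z y v (addrC _ _) hz hy hv).
lcs4 (pp y (D c h z v)) (pp (D b h y v) z) (pp z (D b h y v)) (pp (D c h z v) y);
  rewrite ?epsR ?epsL ?(epsV c h); field; rewrite ?epsnz //.
Qed.

Lemma brE a b c x y z :
  tri_bracket eps dl pp dr a b c x y z = D a (b + c) x (W b c y z).
Proof. by []. Qed.

Lemma W_hom b c y z : hom b y -> hom c z -> hom (b + c) (W b c y z).
Proof.
move=> hy hz; rewrite /W; apply: (homB gr); first exact: pp_hom.
by apply: (homZ gr); rewrite addrC; apply: pp_hom.
Qed.
Lemma D_hom a g x w : hom a x -> hom g w -> hom (a + g) (D a g x w).
Proof.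
move=> hx hw; rewrite /D; apply: (homB gr); first exact: dl_hom.
by apply: (homZ gr); rewrite addrC; apply: dr_hom.
Qed.

Lemma br_leib a b c d e x y z t u :
  hom a x -> hom b y -> hom c z -> hom d t -> hom e u ->
  tri_bracket eps dl pp dr (a + b + c) d e (tri_bracket eps dl pp dr a b c x y z) t u
  = tri_bracket eps dl pp dr a b (c + d + e) x y (tri_bracket eps dl pp dr c d e z t u)
  + eps c (d + e) *: tri_bracket eps dl pp dr a (b + d + e) c x (tri_bracket eps dl pp dr b d e y t u) z
  + eps (b + c) (d + e) *: tri_bracket eps dl pp dr (a + d + e) b c (tri_bracket eps dl pp dr a d e x t u) y z.
Proof.
move=> hx hy hz ht hu; rewrite !brE.
have hw := W_hom hy hz; have hv := W_hom ht hu.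
have DDr : forall a g x w w', D a g x (w + w') = D a g x w + D a g x w'.
  by move=> *; apply: fDr => *; apply: DR.
have DZr : forall a g k x w, D a g x (k *: w) = k *: D a g x w.
  by move=> *; apply: fZr => *; apply: DR.
have -> : a + b + c = a + (b + c) by rewrite addrA.
have -> : c + d + e = c + (d + e) by rewrite addrA.
have -> : b + d + e = b + (d + e) by rewrite addrA.
have -> : a + d + e = a + (d + e) by rewrite addrA.
rewrite (leib hx hw hv) (W_der hy hz hv) DDr DZr.
have -> : b + c + (d + e) = b + (c + (d + e)) by rewrite [RHS]addrA.
have -> : b + (d + e) + c = b + (c + (d + e)) by rewrite [c + _]addrC [RHS]addrA.
by [].
Qed.

Definition br := tri_bracket eps dl pp dr.

Lemma brL1 a b c k x x' y z : br a b c (k *: x + x') y z = k *: br a b c x y z + br a b c x' y z.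
Proof. by rewrite /br !brE DL. Qed.
Lemma brL2 a b c k x y y' z : br a b c x (k *: y + y') z = k *: br a b c x y z + br a b c x y' z.
Proof. by rewrite /br !brE WL DR. Qed.
Lemma brL3 a b c k x y z z' : br a b c x y (k *: z + z') = k *: br a b c x y z + br a b c x y z'.
Proof. by rewrite /br !brE WR DR. Qed.

Lemma lin0 (F : A -> A) : (forall k u u', F (k *: u + u') = k *: F u + F u') -> F 0 = 0.
Proof.
move=> FL; have := FL 1 0 0; rewrite !scale1r addr0 => H.
by apply: (addrI (F 0)); rewrite addr0 -H.
Qed.

Let grr := gr.
Let SG := @Sg G K A hom grr.

Lemma SG_linF_ext F F1 F2 k x : (forall g u, F g u = k *: F1 g u + F2 g u) ->
  SG F x = k *: SG F1 x + SG F2 x.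
Proof. by move=> H; rewrite /SG (@Sg_ext _ _ _ _ _ _ _ x H) Sg_linF. Qed.

Definition T x y z :=
  SG (fun g u => SG (fun h v => SG (fun k w => br g h k u v w) z) y) x.

Lemma T_lin1 k x x' y z : T (k *: x + x') y z = k *: T x y z + T x' y z.
Proof.
rewrite /T /SG Sg_lin // => g k0 u u'.
apply: SG_linF_ext => h v; apply: SG_linF_ext => c w; exact: brL1.
Qed.
Lemma T_lin2 k x y y' z : T x (k *: y + y') z = k *: T x y z + T x y' z.
Proof.
rewrite /T; apply: SG_linF_ext => g u.
rewrite /SG Sg_lin // => h k0 v v'.
apply: SG_linF_ext => c w; exact: brL2.
Qed.
Lemma T_lin3 k x y z z' : T x y (k *: z + z') = k *: T x y z + T x y z'.
Proof.
rewrite /T; apply: SG_linF_ext => g u; apply: SG_linF_ext => h v.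
rewrite /SG Sg_lin // => c k0 w w'; exact: brL3.
Qed.

Lemma br01 a b c y z : br a b c 0 y z = 0.
Proof. by apply: (lin0 (F := fun x => br a b c x y z)) => *; apply: brL1. Qed.
Lemma br02 a b c x z : br a b c x 0 z = 0.
Proof. by apply: (lin0 (F := fun y => br a b c x y z)) => *; apply: brL2. Qed.
Lemma br03 a b c x y : br a b c x y 0 = 0.
Proof. by apply: (lin0 (F := fun z => br a b c x y z)) => *; apply: brL3. Qed.

Lemma SG_zero_ext F x : (forall g u, F g u = 0) -> SG F x = 0.
Proof. by move=> H; rewrite /SG (@Sg_ext _ _ _ _ _ _ _ x H) Sg_zero. Qed.

Lemma T_agree a b c x y z : hom a x -> hom b y -> hom c z ->
  T x y z = br a b c x y z.
Proof.
move=> hx hy hz; rewrite /T.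
rewrite {1}/SG (Sg_homog _ _ hx); last first.
  move=> g /=; apply: SG_zero_ext => h v; apply: SG_zero_ext => c' w; exact: br01.
rewrite {1}/SG (Sg_homog _ _ hy); last first.
  move=> h /=; apply: SG_zero_ext => c' w; exact: br02.
rewrite /SG (Sg_homog _ _ hz) //.
move=> c' /=; exact: br03.
Qed.

Lemma br_hom a b c x y z : hom a x -> hom b y -> hom c z -> hom (a + b + c) (br a b c x y z).
Proof. by move=> hx hy hz; rewrite /br brE -addrA; apply: D_hom => //; apply: W_hom. Qed.

Lemma T_leibniz : ternary_leibniz_color hom eps T.
Proof.
split; [exact: gr | exact: bich | split | ].
- exact: T_lin1.
- exact: T_lin2.
- exact: T_lin3.
- by move=> a b c x y z hx hy hz; rewrite (T_agree hx hy hz); apply: br_hom.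
move=> a b c d e x y z t u hx hy hz ht hu.
rewrite (T_agree hx hy hz) (T_agree (br_hom hx hy hz) ht hu).
rewrite (T_agree hz ht hu) (T_agree hx hy (br_hom hz ht hu)).
rewrite (T_agree hy ht hu) (T_agree hx (br_hom hy ht hu) hz).
rewrite (T_agree hx ht hu) (T_agree (br_hom hx ht hu) hy hz).
exact: br_leib.
Qed.
End Alg.

Unset Implicit Arguments.

Theorem mainTheorem10 (G : zmodType) (K : fieldType) (A : lmodType K)
    (hom : G -> A -> Prop) (eps : G -> G -> K) (dl pp dr : A -> A -> A) :
  (2%:R : K) != 0 ->
  color_trialgebra hom eps dl pp dr ->
  exists T : A -> A -> A -> A,
    (forall a b c x y z, hom a x -> hom b y -> hom c z ->
       T x y z = tri_bracket eps dl pp dr a b c x y z)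
    /\ ternary_leibniz_color hom eps T.
Proof.
move=> _ tr; exists (T tr); split.
  by move=> a b c x y z hx hy hz; apply: T_agree.
exact: T_leibniz.
Qed.
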